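(* Let $P$ be a finite graded bowtie-free poset of rank $n$ with $\hat0,\hat1$ and a good $\mathcal{H}_n(0)$ action $U_1,\dots,U_{n-1}$, let $\mathfrak m_0$ be the unique maximal chain with empty descent set, and let $\mathfrak m\ne\mathfrak m_0$ be a maximal chain. Suppose $U_{i_1}\cdots U_{i_r}(\mathfrak m)=\mathfrak m_0$ and $U_{j_1}\cdots U_{j_s}(\mathfrak m)=\mathfrak m_0$ are both restless. Then there exist a word in the braid class of $U_{i_1}\cdots U_{i_r}$ and a word in the braid class of $U_{j_1}\cdots U_{j_s}$ which both end on the right with the same letter $U_i$.
   Context: Bowtie-free: no distinct $a,b,c,d$ with $a$ and $b$ each covering both $c$ and $d$. A good $\mathcal{H}_n(0)$ action is a family $U_1,\dots,U_{n-1}$ of maps on the set $\mathcal{M}(P)$ of maximal chains with: $U_i(\mathfrak m)$ agrees with $\mathfrak m$ except possibly at rank $i$; $U_i^2=U_i$; $U_iU_j=U_jU_i$ for $|i-j|\ge2$; $U_iU_{i+1}U_i=U_{i+1}U_iU_{i+1}$; and $\omega F_P=\mathrm{ch}(\chi_P)$ ($\chi_P$ the character of the $\mathcal{H}_n(0)$-module $\mathbb{C}\mathcal{M}(P)$ with $T_i=-U_i$, $F_P$ Ehrenborg's flag quasisymmetric function $\sum x_1^{\mathrm{rk}(t_0,t_1)}\cdots x_k^{\mathrm{rk}(t_{k-1},t_k)}$ over multichains $\hat0=t_0\le\cdots\le t_{k-1}<t_k=\hat1$, $\omega(L_{S,n})=L_{[n-1]\setminus S,n}$ on Gessel's fundamental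 quasisymmetric functions, $\mathrm{ch}(\chi_S)=L_{S,n}$ for the one-dimensional characters $\chi_S$: $T_i\mapsto-1$ for $i\in S$, $0$ otherwise). The descent set of $\mathfrak m$ is $\{i:U_i(\mathfrak m)\ne\mathfrak m\}$; such a $P$ has exactly one maximal chain $\mathfrak m_0$ with empty descent set. An expression $U_{i_1}\cdots U_{i_r}(\mathfrak m)=\mathfrak m'$ is restless if $U_{i_r}(\mathfrak m)\ne\mathfrak m$ and $U_{i_j}\cdots U_{i_r}(\mathfrak m)\ne U_{i_{j+1}}\cdots U_{i_r}(\mathfrak m)$ for $j=1,\dots,r-1$. Two words are in the same braid class if one is obtained from the other by repeatedly applying $U_aU_b\leftrightarrow U_bU_a$ ($|a-b|\ge2$) and $U_aU_{a+1}U_a\leftrightarrow U_{a+1}U_aU_{a+1}$. *)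

(* Defs.v *)
From HB Require Import structures.
From mathcomp Require Import all_boot all_order all_algebra.
From mathcomp Require Import mpoly.
From Stdlib Require Relation_Operators.
Set Implicit Arguments. Unset Strict Implicit. Unset Printing Implicit Defensive.
Import GRing.Theory.
Local Open Scope ring_scope.

Section Poset.
Variables (T : finType) (le : rel T).

Definition plt (x y : T) : bool := (x != y) && le x y.
Definition covers (x y : T) : bool :=
  plt x y && [forall z, ~~ (plt x z && plt z y)].

Definition is_poset : Prop :=
  reflexive le /\ antisymmetric le /\ transitive le.

Definition graded (bot top : T) (rk : T -> nat) (n : nat) : Prop :=
  (forall x, le bot x) /\ (forall x, le x top) /\
  rk bot = 0%N /\ rk top = n /\ (forall x y, covers x y -> rk y = (rk x).+1).

Definition bowtie_free : Prop :=
  forall a b c d : T, uniq [:: a; b; c; d] ->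
    ~ [&& covers c a, covers d a, covers c b & covers d b].

Definition maxchain (bot top : T) (n : nat) (m : {ffun 'I_n.+1 -> T}) : bool :=
  [&& m ord0 == bot, m ord_max == top &
      [forall i : 'I_n, covers (m (widen_ord (leqnSn n) i)) (m (lift ord0 i))]].

(* U_{i_1} ... U_{i_r} (m) for the word w = [:: i_1; ...; i_r] *)
Definition applyw (n : nat) (U : nat -> {ffun 'I_n.+1 -> T} -> {ffun 'I_n.+1 -> T})
  (w : seq nat) (m : {ffun 'I_n.+1 -> T}) := foldr U m w.

Definition hecke_action (bot top : T) (n : nat)
  (U : nat -> {ffun 'I_n.+1 -> T} -> {ffun 'I_n.+1 -> T}) : Prop :=
  forall m, maxchain bot top m ->
    (forall i, (0 < i < n)%N ->
       [/\ maxchain bot top (U i m),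
           (forall j : 'I_n.+1, val j != i -> U i m j = m j) &
           U i (U i m) = U i m]) /\
    (forall i j, (0 < i < n)%N -> (0 < j < n)%N -> (i.+2 <= j)%N || (j.+2 <= i)%N ->
       U i (U j m) = U j (U i m)) /\
    (forall i, (0 < i)%N -> (i.+1 < n)%N ->
       U i (U i.+1 (U i m)) = U i.+1 (U i (U i.+1 m))).

(* subsets of [n-1] are encoded as sets S : {set 'I_n} with S \subset Dset n *)
Definition Dset (n : nat) : {set 'I_n} := [set i : 'I_n | (0 < val i)%N].
Definition inS (n : nat) (S : {set 'I_n}) (i : nat) : bool := [exists j in S, val j == i].

(* the one-dimensional character chi_S evaluated at T_{i_1}...T_{i_r} *)
Definition chiS (n : nat) (S : {set 'I_n}) (w : seq nat) : int :=
  \prod_(i <- w) (if inS S i then -1 else 0).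

(* chi_P(T_{i_1}...T_{i_r}) = trace of (-U_{i_1})...(-U_{i_r}) on C M(P) *)
Definition chiP (bot top : T) (n : nat)
  (U : nat -> {ffun 'I_n.+1 -> T} -> {ffun 'I_n.+1 -> T}) (w : seq nat) : int :=
  (-1) ^+ size w *
  (#|[pred m : {ffun 'I_n.+1 -> T} | maxchain bot top m && (applyw U w m == m)]|)%:Z.

(* quasisymmetric functions are handled through their restrictions to the
   variables x_1,...,x_N (here indexed 0,...,N-1); other variables set to 0 *)
Definition Xv (N : nat) (j : nat) : {mpoly int[N]} :=
  oapp (fun i : 'I_N => 'X_i) 0 (insub j).

Definition Fund (N n : nat) (S : {set 'I_n}) : {mpoly int[N]} :=
  \sum_(a : {ffun 'I_n -> 'I_N} |
        [forall j : 'I_n, forall k : 'I_n, (val k == (val j).+1) ==>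
           (if k \in S then (a j < a k)%N else (a j <= a k)%N)])
    \prod_(j : 'I_n) 'X_(a j).

Definition multichain (bot top : T) (k : nat) (t : {ffun 'I_k.+1 -> T}) : bool :=
  [&& t ord0 == bot, t ord_max == top,
      [forall j : 'I_k, le (t (widen_ord (leqnSn k) j)) (t (lift ord0 j))] &
      plt (t (inord k.-1)) (t ord_max)].

(* Ehrenborg's flag quasisymmetric function F_P restricted to N variables
   (terms with k > N vanish under this restriction) *)
Definition FP (bot top : T) (rk : T -> nat) (N : nat) : {mpoly int[N]} :=
  \sum_(1 <= k < N.+1)
    \sum_(t : {ffun 'I_k.+1 -> T} | multichain bot top t)
      \prod_(j < k) Xv N j ^+ (rk (t (lift ord0 j)) - rk (t (widen_ord (leqnSn k) j))).

(* good H_n(0) action: 0-Hecke relations and omega F_P = ch(chi_P).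
   c : coefficients of chi_P in the basis of the chi_S (so ch(chi_P) = sum c_S L_S);
   b : coefficients of F_P in the fundamental basis (so omega F_P = sum b_S L_{[n-1]\S}). *)
Definition good_action (bot top : T) (rk : T -> nat) (n : nat)
  (U : nat -> {ffun 'I_n.+1 -> T} -> {ffun 'I_n.+1 -> T}) : Prop :=
  hecke_action bot top U /\
  exists c : {set 'I_n} -> int,
    (forall w, all (fun i => (0 < i < n)%N) w ->
       chiP bot top U w = \sum_(S : {set 'I_n} | S \subset Dset n) c S * chiS S w) /\
    exists b : {set 'I_n} -> int,
      (forall N, FP bot top rk N = \sum_(S : {set 'I_n} | S \subset Dset n) b S *: Fund N S) /\
      (forall N, \sum_(S : {set 'I_n} | S \subset Dset n) b S *: Fund N (Dset n :\: S)
                 = \sum_(S : {set 'I_n} | S \subset Dset n) c S *: Fund N S).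

Definition restless (n : nat) (U : nat -> {ffun 'I_n.+1 -> T} -> {ffun 'I_n.+1 -> T})
  (w : seq nat) (m : {ffun 'I_n.+1 -> T}) : Prop :=
  forall j, (j < size w)%N -> applyw U (drop j w) m != applyw U (drop j.+1 w) m.

End Poset.

Inductive braid_step : seq nat -> seq nat -> Prop :=
| bs_comm (p q : seq nat) (a b : nat) :
    (b.+2 <= a)%N || (a.+2 <= b)%N ->
    braid_step (p ++ [:: a; b] ++ q) (p ++ [:: b; a] ++ q)
| bs_braid (p q : seq nat) (a : nat) :
    braid_step (p ++ [:: a; a.+1; a] ++ q) (p ++ [:: a.+1; a; a.+1] ++ q).

Definition braid_equiv : seq nat -> seq nat -> Prop :=
  Relation_Operators.clos_refl_sym_trans (seq nat) braid_step.

(* Main.v *)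
Require Import Defs.
From HB Require Import structures.
From mathcomp Require Import all_boot all_order all_algebra.
From mathcomp Require Import mpoly.
From mathcomp Require Import zify.
From Stdlib Require Import Relation_Operators.
Set Implicit Arguments. Unset Strict Implicit. Unset Printing Implicit Defensive.


Lemma bs_size u v : braid_step u v -> size u = size v.
Proof. by case=> *; rewrite !size_cat. Qed.

Lemma be_size u v : braid_equiv u v -> size u = size v.
Proof.
elim=> [x y /bs_size //| x // | x y _ -> // | x y z _ -> _ -> //].
Qed.

Lemma bs_cong s t u v : braid_step u v -> braid_step (s ++ u ++ t) (s ++ v ++ t).
Proof.
case=> [p q a b H|p q a].
- have -> : s ++ (p ++ [:: a; b] ++ q) ++ t = (s ++ p) ++ [:: a; b] ++ (q ++ t)
    by rewrite -!catA.
  have -> : s ++ (p ++ [:: b; a] ++ q) ++ t = (s ++ p) ++ [:: b; a] ++ (q ++ t)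
    by rewrite -!catA.
  exact: bs_comm.
- have -> : s ++ (p ++ [:: a; a.+1; a] ++ q) ++ t = (s ++ p) ++ [:: a; a.+1; a] ++ (q ++ t)
    by rewrite -!catA.
  have -> : s ++ (p ++ [:: a.+1; a; a.+1] ++ q) ++ t = (s ++ p) ++ [:: a.+1; a; a.+1] ++ (q ++ t)
    by rewrite -!catA.
  exact: bs_braid.
Qed.

Lemma be_cong s t u v : braid_equiv u v -> braid_equiv (s ++ u ++ t) (s ++ v ++ t).
Proof.
elim=> [x y H|x|x y _ IH|x y z _ IH1 _ IH2].
- apply: rst_step; exact: bs_cong.
- exact: rst_refl.
- exact: rst_sym.
- exact: rst_trans IH1 IH2.
Qed.

Lemma be_trans u v w : braid_equiv u v -> braid_equiv v w -> braid_equiv u w.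
Proof. exact: rst_trans. Qed.
Lemma be_sym u v : braid_equiv u v -> braid_equiv v u.
Proof. exact: rst_sym. Qed.
Lemma be_step u v : braid_step u v -> braid_equiv u v.
Proof. exact: rst_step. Qed.
Lemma be_refl u : braid_equiv u u.
Proof. exact: rst_refl. Qed.

Lemma be_app_r u v t : braid_equiv u v -> braid_equiv (u ++ t) (v ++ t).
Proof. move=> H; have := be_cong [::] t H; by []. Qed.

Arguments applyw : simpl never.
Section Main.
Variables (T : finType) (le : rel T) (bot top : T) (n : nat)
  (U : nat -> {ffun 'I_n.+1 -> T} -> {ffun 'I_n.+1 -> T}).
Hypothesis HU : hecke_action le bot top U.
Local Notation mc := (maxchain le bot top).
Definition inr (i : nat) := (0 < i < n)%N.

Lemma applyw_cons i u c : applyw U (i :: u) c = U i (applyw U u c).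
Proof. by []. Qed.
Lemma applyw_nil c : applyw U [::] c = c.
Proof. by []. Qed.
Lemma applyw_cat u v c : applyw U (u ++ v) c = applyw U u (applyw U v c).
Proof. by rewrite /applyw foldr_cat. Qed.
Lemma applyw_rcons u a c : applyw U (rcons u a) c = applyw U u (U a c).
Proof. by rewrite -cats1 applyw_cat. Qed.

Lemma U_mc i c : inr i -> mc c -> mc (U i c).
Proof. move=> Hi Hc; case: (HU Hc) => H _; by case: (H i Hi). Qed.
Lemma U_agree i c (j : 'I_n.+1) : inr i -> mc c -> val j != i -> U i c j = c j.
Proof. move=> Hi Hc; case: (HU Hc) => H _; case: (H i Hi) => _ H2 _; exact: H2. Qed.
Lemma U_idem i c : inr i -> mc c -> U i (U i c) = U i c.
Proof. move=> Hi Hc; case: (HU Hc) => H _; by case: (H i Hi). Qed.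
Lemma U_comm i j c : inr i -> inr j -> (i.+2 <= j) || (j.+2 <= i) -> mc c ->
  U i (U j c) = U j (U i c).
Proof. move=> Hi Hj Hf Hc; case: (HU Hc) => _ [H _]; exact: H. Qed.
Lemma U_braid i c : 0 < i -> i.+1 < n -> mc c ->
  U i (U i.+1 (U i c)) = U i.+1 (U i (U i.+1 c)).
Proof. move=> H1 H2 Hc; case: (HU Hc) => _ [_ H]; exact: H. Qed.

Lemma mc_app u c : all inr u -> mc c -> mc (applyw U u c).
Proof.
elim: u => // i u IH /= /andP[Hi Hu] Hc; rewrite applyw_cons; apply: U_mc => //; exact: IH.
Qed.

Lemma comm_past j s c : inr j -> all inr s ->
  all (fun x => (x.+2 <= j) || (j.+2 <= x)) s -> mc c ->
  applyw U (s ++ [:: j]) c = U j (applyw U s c).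
Proof.
elim: s => [|x s IH] Hj // /= /andP[Hx Hs] /andP[Hf Hfs] Hc.
rewrite applyw_cons IH // applyw_cons U_comm //; exact: mc_app.
Qed.

Fixpoint cw k := if k is k'.+1 then k'.+1 :: cw k' else [::].
Fixpoint Ww k := if k is k'.+1 then Ww k' ++ cw k'.+1 else [::].

Lemma cw_bnd k : all (fun x => 0 < x <= k) (cw k).
Proof.
elim: k => //= k IH; rewrite leqnn /=; apply: sub_all IH => x /andP[-> /=] h; lia.
Qed.
Lemma cw_inr k : k < n -> all inr (cw k).
Proof. move=> Hk; apply: sub_all (cw_bnd k) => x /andP[h1 h2]; rewrite /inr h1 /=; lia. Qed.
Lemma Ww_inr k : k < n -> all inr (Ww k).
Proof.
elim: k => // k IH Hk; rewrite /= all_cat IH; last lia. exact: (cw_inr Hk).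
Qed.

Lemma lemA k i c : 2 <= i <= k -> k < n -> mc c ->
  applyw U (cw k ++ [:: i]) c = U i.-1 (applyw U (cw k) c).
Proof.
elim: k i c => [|k IH] i c Hi Hk Hc; first lia.
rewrite /= applyw_cons.
have [Eik|Nik] := eqVneq i k.+1.
- subst i; case: k IH Hi Hk => [|k] IH Hi Hk; first lia.
  rewrite /= applyw_cons comm_past //.
  + rewrite !applyw_cons [RHS]U_braid //; apply: mc_app Hc; apply: cw_inr; lia.
  + apply: cw_inr; lia.
  + apply: sub_all (cw_bnd k) => x /andP[_ h]; apply/orP; left; lia.
- rewrite IH //; try lia.
  rewrite applyw_cons U_comm //.
  + rewrite /inr; lia.
  + apply/orP; right; lia.
  + apply: mc_app Hc; apply: cw_inr; lia.
Qed.


Lemma cw1 k c : 1 <= k -> k < n -> mc c ->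
  applyw U (cw k ++ [:: 1]) c = applyw U (cw k) c.
Proof.
elim: k c => [|k IH] c Hk Hn Hc; first lia.
case: k IH Hk Hn => [|k] IH Hk Hn.
- rewrite /= !applyw_cons !applyw_nil U_idem //; rewrite /inr; lia.
- rewrite /= !applyw_cons; have := IH c; rewrite /= !applyw_cons => -> //; lia.
Qed.

Lemma lemB k i c : 1 <= i <= k -> k < n -> mc c ->
  applyw U (Ww k) (U i c) = applyw U (Ww k) c.
Proof.
elim: k i c => [|k IH] i c Hi Hk Hc; first lia.
rewrite /= !applyw_cat.
have -> : applyw U (cw k.+1) (U i c) = applyw U (cw k.+1 ++ [:: i]) c.
  by rewrite applyw_cat.
have [E1|N1] := eqVneq i 1.
- subst i; rewrite cw1 //; lia.
- rewrite lemA //; try lia.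
  rewrite IH //; try lia.
  apply: mc_app Hc; apply: cw_inr; lia.
Qed.

Definition W := Ww n.-1.

Lemma W_inr : all inr W.
Proof. rewrite /W; case: (posnP n) => [E|Hn]; first by rewrite E. apply: Ww_inr; lia. Qed.

Lemma absorb s c : all inr s -> mc c -> applyw U W (applyw U s c) = applyw U W c.
Proof.
elim: s => [|i s IH] //= /andP[Hi Hs] Hc.
rewrite applyw_cons /W lemB.
- exact: IH.
- move: Hi; rewrite /inr; lia.
- move: Hi; rewrite /inr; lia.
- exact: mc_app.
Qed.

Lemma restless_cons i p c : restless U (i :: p) c <->
  (U i (applyw U p c) != applyw U p c /\ restless U p c).
Proof.
split.
- move=> H; split.
    by have := H 0%N isT; rewrite drop0 /= drop0 applyw_cons.
  move=> j Hj; exact: (H j.+1).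
- move=> [H1 H2] [|j] Hj /=; last exact: H2.
  by rewrite drop0 applyw_cons.
Qed.

Lemma restless_rcons p a c : restless U (rcons p a) c <->
  (U a c != c /\ restless U p (U a c)).
Proof.
split.
- move=> H; split.
  + have := H (size p); rewrite size_rcons ltnSn drop_rcons // drop_size.
    by rewrite drop_oversize ?size_rcons //; move/(_ isT).
  + move=> j Hj; have := H j; rewrite size_rcons ltnS ltnW //.
    rewrite !drop_rcons ?(ltnW Hj) // !applyw_rcons; by move/(_ isT).
- move=> [H1 H2] j; rewrite size_rcons ltnS leq_eqVlt => /orP[/eqP->|Hj].
  + rewrite drop_rcons // drop_size drop_oversize ?size_rcons //.
  + rewrite !drop_rcons ?(ltnW Hj) // !applyw_rcons; exact: H2.
Qed.

Lemma mk_restless P c : all inr P -> exists P',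
  [/\ all inr P', applyw U P' c = applyw U P c & restless U P' c].
Proof.
elim: P => [|i P IH] /=.
- move=> _; exists [::]; split => // j.
- move=> /andP[Hi HP]; have [P' [H1 H2 H3]] := IH HP.
  have [E|Ne] := eqVneq (U i (applyw U P' c)) (applyw U P' c).
  + exists P'; split => //; by rewrite applyw_cons -H2 E.
  + exists (i :: P'); split => /=; first by rewrite Hi.
    * by rewrite !applyw_cons H2.
    * by apply/restless_cons.
Qed.


Variable m0 : {ffun 'I_n.+1 -> T}.
Hypothesis Hm0 : mc m0.
Hypothesis Hfix : forall i, inr i -> U i m0 = m0.

Lemma app_m0 u : all inr u -> applyw U u m0 = m0.
Proof. elim: u => // i u IH /= /andP[Hi Hu]; by rewrite applyw_cons IH // Hfix. Qed.

Lemma restless_m0 p : all inr p -> restless U p m0 -> p = [::].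
Proof.
case: p => // i p /= /andP[Hi Hp] /restless_cons [H _].
by move: H; rewrite app_m0 // Hfix // eqxx.
Qed.

Lemma reach c u s : mc c -> all inr u -> applyw U u c = m0 -> all inr s ->
  applyw U W (applyw U s c) = m0.
Proof.
move=> Hc Hu E Hs; rewrite absorb // -(absorb Hu Hc) E app_m0 //; exact: W_inr.
Qed.

Lemma diff_at i c : inr i -> mc c -> U i c != c -> U i c (inord i) != c (inord i).
Proof.
move=> Hi Hc; apply: contra => /eqP E; apply/eqP/ffunP => j.
have [Ej|Nj] := eqVneq (val j) i.
- have -> : j = inord i by apply: val_inj; rewrite /= inordK // -Ej ltn_ord.
  exact: E.
- exact: U_agree.
Qed.

Lemma covers_chain (m : {ffun 'I_n.+1 -> T}) k : mc m -> k < n ->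
  covers le (m (inord k)) (m (inord k.+1)).
Proof.
move=> /and3P[_ _ /forallP H] Hk; have := H (Ordinal Hk).
have -> : widen_ord (leqnSn n) (Ordinal Hk) = inord k.
  by apply: val_inj; rewrite /= inordK //; lia.
have -> // : lift ord0 (Ordinal Hk) = inord k.+1.
by apply: val_inj; rewrite /= inordK //; lia.
Qed.

Lemma agree_ord i c k : inr i -> mc c -> k <= n -> k != i ->
  U i c (inord k) = c (inord k).
Proof. move=> Hi Hc Hk Nk; apply: U_agree => //; rewrite /= inordK //. Qed.

Lemma covers_neq x y : covers le x y -> x != y.
Proof. by case/andP=> /andP[]. Qed.


Lemma no_bow a c (t : {ffun 'I_n.+1 -> T}) : bowtie_free le -> 0 < a -> a.+1 < n ->
  mc c -> mc t -> U a c != c -> U a.+1 c != c ->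
  t (inord a) = U a c (inord a) -> t (inord a.+1) = U a.+1 c (inord a.+1) -> False.
Proof.
move=> Hbow Ha Han Hc Ht Nx Ny E1 E2.
have ia : inr a by rewrite /inr; lia.
have ib : inr a.+1 by rewrite /inr; lia.
have va : (inord a : 'I_n.+1) = a :> nat by rewrite inordK //; lia.
have vb : (inord a.+1 : 'I_n.+1) = a.+1 :> nat by rewrite inordK //; lia.
have xb : U a c (inord a.+1) = c (inord a.+1) by apply: U_agree => //=; rewrite vb; lia.
have ya : U a.+1 c (inord a) = c (inord a) by apply: U_agree => //=; rewrite va; lia.
have dx := diff_at ia Hc Nx.
have dy := diff_at ib Hc Ny.
have c1 := covers_chain Hc (ltnW Han).
have := covers_chain (U_mc ib Hc) (ltnW Han); rewrite ya => c2.
have := covers_chain (U_mc ia Hc) (ltnW Han); rewrite xb => c3.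
have := covers_chain Ht (ltnW Han); rewrite E1 E2 => c4.
apply: (Hbow (c (inord a.+1)) (U a.+1 c (inord a.+1)) (c (inord a)) (U a c (inord a))); last first.
  by rewrite c1 c2 c3 c4.
have n1 := covers_neq c1; have n2 := covers_neq c2; have n3 := covers_neq c3;
have n4 := covers_neq c4.
rewrite /= !inE !negb_or.
rewrite eq_sym dy /= eq_sym n1 /= eq_sym n3 /= eq_sym n2 /= eq_sym n4 /=.
by rewrite eq_sym dx.
Qed.


Definition Claim k := forall c p q, mc c -> all inr p -> all inr q ->
  restless U p c -> restless U q c -> applyw U p c = m0 -> applyw U q c = m0 ->
  size p <= k -> braid_equiv p q.

Lemma combine k x y p1 q1 v sx sy : Claim k -> mc x -> mc y ->
  all inr p1 -> all inr q1 -> all inr (v ++ sx) -> all inr (v ++ sy) ->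
  restless U p1 x -> restless U q1 y -> restless U (v ++ sx) x -> restless U (v ++ sy) y ->
  applyw U p1 x = m0 -> applyw U q1 y = m0 ->
  applyw U (v ++ sx) x = m0 -> applyw U (v ++ sy) y = m0 ->
  size sx = size sy -> (size p1 <= k \/ size q1 <= k) ->
  braid_equiv p1 (v ++ sx) /\ braid_equiv q1 (v ++ sy).
Proof.
move=> IH Hx Hy Hp Hq Hvx Hvy Rp Rq Rvx Rvy Ep Eq Evx Evy Es [Hk|Hk].
- have e1 := IH x p1 (v ++ sx) Hx Hp Hvx Rp Rvx Ep Evx Hk.
  have := be_size e1; rewrite !size_cat Es => Es1.
  split => //; apply: be_sym; apply: (IH y (v ++ sy) q1) => //.
  by rewrite size_cat -Es1.
- have e2 := IH y q1 (v ++ sy) Hy Hq Hvy Rq Rvy Eq Evy Hk.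
  have := be_size e2; rewrite !size_cat -Es => Es1.
  split => //; apply: be_sym; apply: (IH x (v ++ sx) p1) => //.
  by rewrite size_cat -Es1.
Qed.

Lemma step_far k c p1 q1 a b : Claim k -> mc c -> inr a -> inr b ->
  (a.+2 <= b) || (b.+2 <= a) -> all inr p1 -> all inr q1 ->
  restless U p1 (U a c) -> restless U q1 (U b c) -> U a c != c -> U b c != c ->
  applyw U p1 (U a c) = m0 -> applyw U q1 (U b c) = m0 ->
  (size p1 <= k \/ size q1 <= k) -> braid_equiv (rcons p1 a) (rcons q1 b).
Proof.
move=> IH Hc Ha Hb Hf.
have ab : b != a by apply/eqP; move: Hf; clear; lia.
have ba : a != b by apply/eqP; move: Hf; clear; lia.
have an : a <= n by move: Ha; rewrite /inr; clear; lia.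
have bn : b <= n by move: Hb; rewrite /inr; clear; lia.
move=> Hp1 Hq1 Rp Rq Nx Ny Ep Eq Hk.
have Hx := U_mc Ha Hc. have Hy := U_mc Hb Hc.
have Ez : U a (U b c) = U b (U a c) := U_comm Ha Hb Hf Hc.
have Hz : applyw U W (U b (U a c)) = m0.
  have := reach (u := rcons p1 a) (s := [:: b; a]) Hc.
  rewrite !applyw_cons applyw_nil; apply.
  - by rewrite all_rcons Ha.
  - by rewrite applyw_rcons.
  - by rewrite /= Ha Hb.
have [v [Hv Ev Rv]] := mk_restless (U b (U a c)) W_inr.
have Nbx : U b (U a c) != U a c.
  apply/negP => /eqP E.
  have := diff_at Hb Hc Ny; apply/negP; rewrite negbK; apply/eqP.
  by rewrite -(@agree_ord a (U b c)) // Ez E agree_ord.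
have Nay : U a (U b c) != U b c.
  apply/negP => /eqP E.
  have := diff_at Ha Hc Nx; apply/negP; rewrite negbK; apply/eqP.
  by rewrite -(@agree_ord b (U a c)) // -Ez E agree_ord.
have [e1 e2] : braid_equiv p1 (v ++ [:: b]) /\ braid_equiv q1 (v ++ [:: a]).
  apply: (combine IH (U_mc Ha Hc) (U_mc Hb Hc)) => //.
  - by rewrite all_cat Hv /= Hb.
  - by rewrite all_cat Hv /= Ha.
  - by rewrite cats1; apply/restless_rcons; split.
  - by rewrite cats1; apply/restless_rcons; split => //; rewrite Ez.
  - by rewrite applyw_cat applyw_cons applyw_nil Ev.
  - by rewrite applyw_cat applyw_cons applyw_nil Ez Ev.
rewrite -!cats1.
apply: be_trans (be_app_r [:: a] e1) _.
apply: be_trans (be_sym (be_app_r [:: b] e2)).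
apply: be_step.
have := @bs_comm v [::] b a Hf; by rewrite !cats0 -!catA.
Qed.


Lemma step_braid k c p1 q1 a : bowtie_free le -> Claim k -> mc c -> 0 < a -> a.+1 < n ->
  all inr p1 -> all inr q1 ->
  restless U p1 (U a c) -> restless U q1 (U a.+1 c) -> U a c != c -> U a.+1 c != c ->
  applyw U p1 (U a c) = m0 -> applyw U q1 (U a.+1 c) = m0 ->
  (size p1 <= k \/ size q1 <= k) -> braid_equiv (rcons p1 a) (rcons q1 a.+1).
Proof.
move=> Hbow IH Hc Ha Han.
have ia : inr a by rewrite /inr; clear -Ha Han; lia.
have ib : inr a.+1 by rewrite /inr; clear -Ha Han; lia.
have an : a <= n by clear -Han; lia.
have an1 : a.+1 <= n by clear -Han; lia.
have d1 : a != a.+1 by clear; lia.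
have d2 : a.+1 != a by clear; lia.
move=> Hp1 Hq1 Rp Rq Nx Ny Ep Eq Hk.
have Ebr := U_braid Ha Han Hc.
have Hx := U_mc ia Hc. have Hy := U_mc ib Hc.
have Hxy := U_mc ia Hy. have Hyx := U_mc ib Hx.
have key1 : U a (U a.+1 (U a c)) (inord a) = U a c (inord a) -> False.
  move=> E; apply: (no_bow Hbow Ha Han Hc Hxy Nx Ny).
  - by rewrite -E Ebr [RHS]agree_ord.
  - by rewrite agree_ord.
have key2 : U a (U a.+1 (U a c)) (inord a.+1) = U a.+1 c (inord a.+1) -> False.
  move=> E; apply: (no_bow Hbow Ha Han Hc Hyx Nx Ny).
  - by rewrite agree_ord.
  - by rewrite -E [RHS]agree_ord.
have N1 : U a.+1 (U a c) != U a c.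
  apply/negP => /eqP E; apply: key1; by rewrite E U_idem.
have N2 : U a (U a.+1 (U a c)) != U a.+1 (U a c).
  apply/negP => /eqP E; apply: key1; by rewrite E agree_ord.
have N3 : U a (U a.+1 c) != U a.+1 c.
  apply/negP => /eqP E; apply: key2; by rewrite Ebr E U_idem.
have N4 : U a.+1 (U a (U a.+1 c)) != U a (U a.+1 c).
  apply/negP => /eqP E; apply: key2; by rewrite Ebr E agree_ord.
have Hz : applyw U W (U a (U a.+1 (U a c))) = m0.
  have := reach (u := rcons p1 a) (s := [:: a; a.+1; a]) Hc.
  rewrite !applyw_cons applyw_nil; apply.
  - by rewrite all_rcons ia.
  - by rewrite applyw_rcons.
  - by rewrite /= ia ib.
have [v [Hv Ev Rv]] := mk_restless (U a (U a.+1 (U a c))) W_inr.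
have [e1 e2] : braid_equiv p1 (v ++ [:: a; a.+1]) /\ braid_equiv q1 (v ++ [:: a.+1; a]).
  apply: (combine IH Hx Hy) => //.
  - by rewrite all_cat Hv /= ia ib.
  - by rewrite all_cat Hv /= ia ib.
  - rewrite -[[:: a; a.+1]]/([:: a] ++ [:: a.+1]) catA !cats1.
    apply/restless_rcons; split => //; apply/restless_rcons; split => //.
  - rewrite -[[:: a.+1; a]]/([:: a.+1] ++ [:: a]) catA !cats1.
    apply/restless_rcons; split => //; apply/restless_rcons; split => //.
    by rewrite -Ebr.
  - by rewrite applyw_cat !applyw_cons applyw_nil Ev.
  - by rewrite applyw_cat !applyw_cons applyw_nil -Ebr Ev.
rewrite -!cats1.
apply: be_trans (be_app_r [:: a] e1) _.
apply: be_trans (be_sym (be_app_r [:: a.+1] e2)).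
apply: be_step.
have := @bs_braid v [::] a; by rewrite !cats0 -!catA.
Qed.

Lemma claim_all k : bowtie_free le -> Claim k.
Proof.
move=> Hbow; elim: k => [|k IH] c p q Hc Hp Hq Rp Rq Ep Eq Hk.
- case: p Hp Rp Ep Hk => // _ _ Ep _.
  rewrite applyw_nil in Ep; subst c.
  rewrite (restless_m0 Hq Rq); exact: be_refl.
have [Ec|Nc] := eqVneq c m0.
- subst c; rewrite (restless_m0 Hp Rp) (restless_m0 Hq Rq); exact: be_refl.
case/lastP: p Hp Rp Ep Hk => [|p1 a].
  by move=> _ _; rewrite applyw_nil => E; rewrite E eqxx in Nc.
case/lastP: q Hq Rq Eq => [|q1 b].
  by move=> _ _; rewrite applyw_nil => E; rewrite E eqxx in Nc.
rewrite !all_rcons applyw_rcons applyw_rcons size_rcons ltnS.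
move=> /andP[Hb Hq1] /restless_rcons [Ny Rq1] Eq /andP[Ha Hp1] /restless_rcons [Nx Rp1] Ep Hk.
have [Eab|Nab] := eqVneq a b.
- subst b; rewrite -!cats1; apply: be_app_r.
  exact: (IH (U a c) p1 q1 (U_mc Ha Hc)).
have [Hf|Hnf] := boolP ((a.+2 <= b) || (b.+2 <= a)).
- by apply: (step_far IH Hc Ha Hb Hf) => //; left.
have [Eb|Ea] : b = a.+1 \/ a = b.+1.
  move: Hnf Nab; rewrite negb_or -!ltnNge => /andP[h1 h2] /eqP h3; clear -h1 h2 h3; lia.
- subst b; apply: (step_braid Hbow IH Hc) => //.
  + by move: Ha; rewrite /inr; clear; lia.
  + by left.
- subst a; apply: be_sym; apply: (step_braid Hbow IH Hc) => //.
  + by move: Hb; rewrite /inr; clear; lia.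
  + by right.
Qed.

End Main.

Theorem mainTheorem11 (T : finType) (le : rel T) (bot top : T) (rk : T -> nat)
  (n : nat) (U : nat -> {ffun 'I_n.+1 -> T} -> {ffun 'I_n.+1 -> T})
  (m0 m : {ffun 'I_n.+1 -> T}) (w w' : seq nat) :
  is_poset le -> graded le bot top rk n -> bowtie_free le ->
  good_action le bot top rk U ->
  maxchain le bot top m0 -> (forall i, (0 < i < n)%N -> U i m0 = m0) ->
  maxchain le bot top m -> m != m0 ->
  all (fun i => (0 < i < n)%N) w -> all (fun i => (0 < i < n)%N) w' ->
  applyw U w m = m0 -> applyw U w' m = m0 ->
  restless U w m -> restless U w' m ->
  exists (p q : seq nat) (i : nat),
    braid_equiv w (rcons p i) /\ braid_equiv w' (rcons q i).
Proof.
move=> _ _ Hbow [HU _] Hm0 Hfix Hm Nm Hw Hw' Ew Ew' Rw Rw'.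
have E : braid_equiv w w'.
  exact: (@claim_all T le bot top n U HU m0 Hm0 Hfix (size w) Hbow m w w' Hm Hw Hw' Rw Rw' Ew Ew' (leqnn _)).
case/lastP: w Hw Ew Rw E => [|p i].
  by move=> _; rewrite applyw_nil => Em; rewrite Em eqxx in Nm.
move=> _ _ _ E; exists p, p, i; split; [exact: be_refl | exact: be_sym].
Qed.
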